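(* Let $r\geq 1$ and let $\mathbf a=(a_1,\ldots,a_r)$ be positive integers. Write the partial fraction decomposition $$\frac{1}{(1-z^{a_1})\cdots(1-z^{a_r})}=\sum_{\lambda}\sum_{\ell=1}^{m(\lambda)}\frac{c_{\lambda,\ell}}{(\lambda-z)^{\ell}},$$ where $\lambda$ ranges over the distinct roots of the denominator and $m(\lambda)$ is the multiplicity of $\lambda$ as a root. Then for $1\leq m\leq r$, $c_m:=c_{1,m}$ satisfies $$c_m = \frac{(-1)^{r-m}(m-1)!}{a_1\cdots a_r} \sum_{\ell=m}^r \frac{\left\{ {\ell \atop m}\right\}} {(\ell-1)!} \sum_{i_1+\cdots+i_r=r-\ell}\frac{B_{i_1}\cdots B_{i_r}}{i_1!\cdots i_r!}a_1^{i_1} \cdots a_r^{i_r},$$ where the inner sum runs over tuples of nonnegative integers $(i_1,\ldots,i_r)$.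
   Context: $B_\ell$ are the Bernoulli numbers defined by $\frac{t}{e^t-1}=\sum_{\ell\geq0}B_\ell\frac{t^\ell}{\ell!}$. $\left\{ {\ell \atop m}\right\}$ denotes the Stirling number of the second kind. *)

(* Defs.v *)
From HB Require Import structures.
From mathcomp Require Import all_boot all_order all_algebra all_field.
Set Implicit Arguments. Unset Strict Implicit. Unset Printing Implicit Defensive.
Import Order.TTheory GRing.Theory Num.Theory.
Local Open Scope ring_scope.

Fixpoint stirling2 (n k : nat) : nat :=
  match n, k with
  | 0, 0 => 1
  | 0, _.+1 => 0
  | _.+1, 0 => 0
  | n'.+1, k'.+1 => k'.+1 * stirling2 n' k + stirling2 n' k'
  end.

(* Bernoulli numbers, defined by t/(e^t-1) = sum_l B_l t^l / l!.
   Since t/(e^t-1) is the multiplicative inverse of the formal power series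
   (e^t-1)/t = sum_k t^k/(k+1)!, the coefficients b_l = B_l/l! are determined by
   the Cauchy-product identity  sum_{k=0}^n b_k / (n-k+1)! = [n == 0],
   i.e. b_0 = 1 and b_n = - sum_{k<n} b_k/(n-k+1)!  for n >= 1.
   bern_seq n lists B_0, ..., B_n. *)
Fixpoint bern_seq (n : nat) : seq algC :=
  match n with
  | 0 => [:: 1]
  | n'.+1 =>
      let s := bern_seq n' in
      rcons s (- (n`!)%:R *
               \sum_(k < n) (s`_k / (k`!)%:R / (((n - k).+1)`!)%:R))
  end.

Definition bernoulli (n : nat) : algC := (bern_seq n)`_n.

Definition denom_poly (r : nat) (a : 'I_r -> nat) : {poly algC} :=
  \prod_(j < r) (1 - 'X^(a j)).

(* Main.v *)
Require Import Defs.
From HB Require Import structures.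
From mathcomp Require Import all_boot all_order all_algebra all_field.
From mathcomp Require Import zify ring lra.
Import Order.TTheory GRing.Theory Num.Theory.
Local Open Scope ring_scope.

Definition eqN (N : nat) (p q : {poly algC}) := forall i, (i < N)%N -> p`_i = q`_i.

Lemma eqN_refl N p : eqN N p p. Proof. by []. Qed.
Lemma eqN_sym N p q : eqN N p q -> eqN N q p. Proof. by move=> h i hi; rewrite h. Qed.
Lemma eqN_trans N p q s : eqN N p q -> eqN N q s -> eqN N p s.
Proof. by move=> h1 h2 i hi; rewrite h1 // h2. Qed.
Lemma eqN_le N M p q : (N <= M)%N -> eqN M p q -> eqN N p q.
Proof. by move=> hNM h i hi; apply: h; apply: leq_trans hNM. Qed.
Lemma eqN_add N p q p' q' : eqN N p p' -> eqN N q q' -> eqN N (p + q) (p' + q').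
Proof. by move=> h1 h2 i hi; rewrite !coefD h1 // h2. Qed.
Lemma eqN_opp N p p' : eqN N p p' -> eqN N (- p) (- p').
Proof. by move=> h1 i hi; rewrite !coefN h1. Qed.
Lemma eqN_sub N p q p' q' : eqN N p p' -> eqN N q q' -> eqN N (p - q) (p' - q').
Proof. by move=> h1 h2; apply: eqN_add => //; apply: eqN_opp. Qed.
Lemma eqN_scale N c p p' : eqN N p p' -> eqN N (c *: p) (c *: p').
Proof. by move=> h1 i hi; rewrite !coefZ h1. Qed.
Lemma eqN_mul N p q p' q' : eqN N p p' -> eqN N q q' -> eqN N (p * q) (p' * q').
Proof.
move=> h1 h2 i hi; rewrite !coefM; apply: eq_bigr => j _.
rewrite h1 ?h2 //; last by apply: leq_ltn_trans hi; rewrite -ltnS.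
by apply: leq_ltn_trans hi; apply: leq_subr.
Qed.
Lemma eqN_sum N (I : Type) (rs : seq I) (F G : I -> {poly algC}) :
  (forall i, eqN N (F i) (G i)) -> eqN N (\sum_(i <- rs) F i) (\sum_(i <- rs) G i).
Proof. by move=> h i hi; rewrite !coef_sum; apply: eq_bigr => j _; apply: h. Qed.
Lemma eqN_prod N (I : Type) (rs : seq I) (F G : I -> {poly algC}) :
  (forall i, eqN N (F i) (G i)) -> eqN N (\prod_(i <- rs) F i) (\prod_(i <- rs) G i).
Proof.
move=> h; elim: rs => [|x rs IH]; first by rewrite !big_nil.
by rewrite !big_cons; apply: eqN_mul.
Qed.
Lemma eqN_exp N p p' k : eqN N p p' -> eqN N (p ^+ k) (p' ^+ k).
Proof.
move=> h; elim: k => [|k IH]; first by rewrite !expr0.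
by rewrite !exprS; apply: eqN_mul.
Qed.
Lemma eqN_mulX N p q : eqN N.+1 ('X * p) ('X * q) -> eqN N p q.
Proof. by move=> h i hi; have := h i.+1 hi; rewrite !coefXM. Qed.
Lemma eqN_deriv N p q : eqN N.+1 p q -> eqN N p^`() q^`().
Proof. by move=> h i hi; rewrite !coef_deriv h. Qed.

Lemma eqN0_mul N M p q : eqN N p 0 -> eqN M q 0 -> eqN (N + M) (p * q) 0.
Proof.
move=> hp hq i hi; rewrite coef0 coefM big1 // => j _.
case: (ltnP j N) => hj; first by rewrite hp // coef0 mul0r.
rewrite hq ?coef0 ?mulr0 //.
have := ltn_ord j; lia.
Qed.

Arguments eqN_sym {N p q}.
Arguments eqN_trans {N p q s}.
Arguments eqN_le {N M p q}.
Arguments eqN_add {N p q p' q'}.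
Arguments eqN_opp {N p p'}.
Arguments eqN_sub {N p q p' q'}.
Arguments eqN_scale {N} c {p p'}.
Arguments eqN_mul {N p q p' q'}.
Arguments eqN_sum {N I rs F G}.
Arguments eqN_prod {N I rs F G}.
Arguments eqN_exp {N p p'} k.
Arguments eqN_mulX {N p q}.
Arguments eqN_deriv {N p q}.
Arguments eqN0_mul {N M p q}.

Lemma size_bern_seq n : size (bern_seq n) = n.+1.
Proof. by elim: n => [|n IH] //=; rewrite size_rcons IH. Qed.

Lemma nth_bern_seq n k : (k <= n)%N -> (bern_seq n)`_k = bernoulli k.
Proof.
elim: n => [|n IH]; first by rewrite leqn0 => /eqP ->.
rewrite leq_eqVlt => /orP [/eqP -> //| hk].
by rewrite /= nth_rcons size_bern_seq hk IH.
Qed.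

Lemma bernoulliS n : bernoulli n.+1 =
  - (n.+1`!)%:R * \sum_(k < n.+1) (bernoulli k / (k`!)%:R / (((n.+1 - k).+1)`!)%:R).
Proof.
rewrite /bernoulli /= nth_rcons size_bern_seq ltnn eqxx; congr (_ * _).
by apply: eq_bigr => k _; rewrite nth_bern_seq // -ltnS.
Qed.

Lemma fact_neq0 n : (n`!)%:R != 0 :> algC.
Proof. by rewrite pnatr_eq0 -lt0n fact_gt0. Qed.

Lemma bern_rec n : \sum_(k < n.+1) (bernoulli k / (k`!)%:R / (((n - k).+1)`!)%:R) = (n == 0%N)%:R.
Proof.
case: n => [|n]; first by rewrite big_ord1 /bernoulli /= !divr1.
rewrite big_ord_recr /= subnn bernoulliS /=.
set S := \sum_(k < n.+1) _.
have h : (n.+1`!)%:R != 0 :> algC by apply: fact_neq0.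
by rewrite divr1 mulNr mulNr [_ * S]mulrC mulfK // subrr.
Qed.

Definition Ex (N : nat) (x : algC) : {poly algC} := \poly_(k < N) (x ^+ k / (k`!)%:R).
Definition Px (N : nat) (x : algC) : {poly algC} := \poly_(k < N) (x ^+ k / (k.+1`!)%:R).
Definition Bpx (N : nat) (x : algC) : {poly algC} :=
  \poly_(k < N) (bernoulli k * x ^+ k / (k`!)%:R).

Lemma Ex_mul N x y : eqN N (Ex N x * Ex N y) (Ex N (x + y)).
Proof.
move=> i hi; rewrite coefM !coef_poly hi addrC exprDn.
rewrite mulr_suml; apply: eq_bigr => j _.
have hj : (j <= i)%N by rewrite -ltnS.
rewrite !coef_poly (leq_ltn_trans hj hi) (leq_ltn_trans (leq_subr j i) hi).
have := bin_fact hj => hb.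
have hf : (i`!)%:R = ('C(i, j))%:R * (j`!)%:R * ((i - j)`!)%:R :> algC
  by rewrite -!natrM -mulnA hb.
rewrite -mulr_natr hf.
have h1 := fact_neq0 j; have h2 := fact_neq0 (i - j).
have h3 : ('C(i, j))%:R != 0 :> algC by rewrite pnatr_eq0 -lt0n bin_gt0.
field; rewrite h1 h2 h3 //.
Qed.

Lemma Ex0 N : eqN N (Ex N 0) 1.
Proof.
move=> i hi; rewrite coef_poly hi coef1; case: i hi => [|i] _.
  by rewrite expr0 divr1.
by rewrite expr0n /= mul0r.
Qed.

Lemma Ex_exp N x k : eqN N (Ex N x ^+ k) (Ex N (x *+ k)).
Proof.
elim: k => [|k IH]; first by rewrite expr0 mulr0n; apply: eqN_sym; apply: Ex0.
rewrite exprS mulrS.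
apply: (@eqN_trans _ _ (Ex N x * Ex N (x *+ k)) _); last by apply: Ex_mul.
by apply: eqN_mul => //; apply: eqN_refl.
Qed.

Lemma Ex_sub1 N x : eqN N (1 - Ex N x) (- x *: ('X * Px N x)).
Proof.
move=> i hi; rewrite coefB coef1 coef_poly hi coefZ coefXM.
case: i hi => [|i] hi /=; first by rewrite expr0 divr1 subrr mulr0.
rewrite coef_poly (ltnW hi) sub0r exprS; field.
by rewrite fact_neq0.
Qed.

Lemma Bp_P N x : eqN N (Bpx N x * Px N x) 1.
Proof.
move=> i hi; rewrite coefM coef1.
transitivity (x ^+ i * \sum_(k < i.+1) (bernoulli k / (k`!)%:R / (((i - k).+1)`!)%:R)).
  rewrite mulr_sumr; apply: eq_bigr => j _.
  have hj : (j <= i)%N by rewrite -ltnS.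
  rewrite !coef_poly (leq_ltn_trans hj hi) (leq_ltn_trans (leq_subr j i) hi).
  have -> : x ^+ i = x ^+ j * x ^+ (i - j) by rewrite -exprD subnKC.
  have h1 := fact_neq0 j; have h2 := fact_neq0 (i - j).+1.
  by field; rewrite h1 h2.
rewrite bern_rec; case: i hi => [|i] hi /=; first by rewrite expr0 mulr1.
by rewrite mulr0.
Qed.

Lemma Ex_deriv N x : eqN N.-1 (Ex N x)^`() (x *: Ex N x).
Proof.
move=> i hi; rewrite coef_deriv coefZ !coef_poly.
have hi1 : (i.+1 < N)%N by case: N hi => //= N; rewrite ltnS.
rewrite hi1 (ltnW hi1) exprS factS -mulr_natr natrM.
have h1 := fact_neq0 i; have h2 : (i.+1)%:R != 0 :> algC by rewrite pnatr_eq0.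
by field; rewrite h1 addrC natr1 h2.

Qed.

Lemma coef0_exp (q : {poly algC}) k : (q ^+ k)`_0 = q`_0 ^+ k.
Proof.
elim: k => [|k IH]; first by rewrite !expr0 coef1.
by rewrite !exprS coefM big_ord1 IH.
Qed.

Lemma stir N x p m : (p < N)%N ->
  ((Ex N x - 1) ^+ m)`_p * (p`!)%:R = x ^+ p * (m`!)%:R * (stirling2 p m)%:R.
Proof.
elim: p m => [|p IH] m hp.
  rewrite coef0_exp coefB coef1 coef_poly hp expr0 divr1 subrr.
  by case: m => [|m]; rewrite ?expr0 ?expr0n /= ?mulr1 ?mul0r ?mulr0.
case: m => [|m].
  by rewrite expr0 coef1 /= mul0r mulr0.
set Q := Ex N x - 1.
have hp' : (p < N)%N by apply: ltnW.
have hpN : (p < N.-1)%N by rewrite -ltnS (ltn_predK hp).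
have e1 : (Q ^+ m.+1)`_p.+1 * (p.+1`!)%:R = ((Q ^+ m.+1)^`())`_p * (p`!)%:R.
  by rewrite coef_deriv factS natrM -mulr_natr; ring.
rewrite e1 deriv_exp /= coefMn.
have hQ : Q^`() = (Ex N x)^`() by rewrite /Q derivB derivC subr0.
have e2 : ((Q^`() * Q ^+ m))`_p = x * ((Q ^+ m.+1)`_p + (Q ^+ m)`_p).
  rewrite hQ.
  have := eqN_mul (Ex_deriv N x) (eqN_refl N.-1 (Q ^+ m)) p hpN => ->.
  rewrite -scalerAl coefZ; congr (x * _).
  have -> : Ex N x * Q ^+ m = Q ^+ m.+1 + Q ^+ m by rewrite exprS /Q; ring.
  by rewrite coefD.
rewrite e2 -[_ *+ m.+1]mulr_natr.
have := IH m.+1 hp'; have := IH m hp'.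
rewrite /=. set A := (Q ^+ m.+1)`_p. set B := (Q ^+ m)`_p.
move=> hB hA.
have -> : x * (A + B) * (m.+1)%:R * (p`!)%:R = x * (m.+1)%:R * (A * (p`!)%:R + B * (p`!)%:R) by ring.
rewrite hA hB factS natrM natrD natrM exprS; ring.
Qed.

Lemma stirling2_small p m : (p < m)%N -> stirling2 p m = 0%N.
Proof.
elim: p m => [|p IH] [|m] //= h.
by rewrite !IH // ?muln0 // ltnW.
Qed.

Lemma eqN_eq N p q : p = q -> eqN N p q. Proof. by move=> ->. Qed.

Lemma ortho_coef N (V W U : {poly algC}) m l :
  eqN N (V * W) 1 -> eqN N U ('X * V) -> (0 < m)%N -> (0 < l)%N -> (l < N.-1)%N ->
  (U^`() * U ^+ m.-1 * W ^+ l)`_l.-1 = (m == l)%:R.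
Proof.
move=> hVW hU hm hl hlN.
set M := N.-1.
have hN : N = M.+1 by rewrite /M prednK //; lia.
have hlM : (l.-1 < M)%N by lia.
have hU' : eqN M U^`() (V + 'X * V^`()).
  have := eqN_deriv (N := M) (p := U) (q := 'X * V); rewrite -hN => h.
  by move: (h hU); rewrite derivM derivX mul1r.
have hVW' : eqN M (V^`() * W + V * W^`()) 0.
  have := eqN_deriv (N := M) (p := V * W) (q := 1); rewrite -hN => h.
  by move: (h hVW); rewrite derivM derivC.
have hVWM : eqN M (V * W) 1 by apply: (eqN_le (M := N)) => //; rewrite hN.
have hUM : eqN M U ('X * V) by apply: (eqN_le (M := N)) => //; rewrite hN.
have e1 : eqN M (U^`() * U ^+ m.-1 * W ^+ l)
   ('X ^+ m.-1 * (V ^+ m.-1 * W ^+ l * (V + 'X * V^`()))).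
  apply: eqN_trans (eqN_mul (eqN_mul hU' (eqN_exp m.-1 hUM)) (eqN_refl _ (W ^+ l))) _.
  by apply: eqN_eq; rewrite exprMn; ring.
rewrite e1 // coefXnM.
case: ltnP => hml.
  by have -> : (m == l) = false by apply/negbTE; lia.
set j := (l - m.-1)%N.
have hl_eq : l = (m.-1 + j)%N by rewrite /j; lia.
have e2 : eqN M (V ^+ m.-1 * W ^+ l * (V + 'X * V^`()))
   (W ^+ j.-1 + 'X * (V^`() * W ^+ j)).
  have hj : (0 < j)%N by rewrite /j; lia.
  have -> : V ^+ m.-1 * W ^+ l * (V + 'X * V^`()) =
    (V * W) ^+ m.-1 * ((V * W) * W ^+ j.-1 + 'X * (V^`() * W ^+ j)).
    rewrite hl_eq exprD exprMn -{1 3}(prednK hj) exprS; ring.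
  apply: eqN_trans (eqN_mul (eqN_exp m.-1 hVWM) (eqN_add (eqN_mul hVWM (eqN_refl _ (W ^+ j.-1))) (eqN_refl _ _))) _.
  by apply: eqN_eq; rewrite expr1n; ring.
have hidx : (l.-1 - m.-1 = j.-1)%N by rewrite /j; lia.
rewrite hidx e2; last by lia.
rewrite coefD coefXM.
case hj: j hidx => [|k]; first by rewrite /j in hj; lia.
case: k hj => [|k] hj hidx.
  have -> : m = l by lia.
  by rewrite eqxx /= expr0 coef1 addr0.
have -> : (m == l) = false by apply/negbTE; lia.
rewrite /=.
have e3 : eqN M (V^`() * W ^+ k.+2) (- (W^`() * W ^+ k)).
  have -> : V^`() * W ^+ k.+2 = (V^`() * W + V * W^`()) * W ^+ k.+1 - (V * W) * (W^`() * W ^+ k).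
    by rewrite !exprS; ring.
  apply: eqN_trans (eqN_sub (eqN_mul hVW' (eqN_refl _ _)) (eqN_mul hVWM (eqN_refl _ _))) _.
  by apply: eqN_eq; ring.
rewrite e3; last by lia.
have e4 : ((W ^+ k.+1)^`())`_k = (W ^+ k.+1)`_k.+1 *+ k.+1 := coef_deriv _ _.
rewrite deriv_exp (coefMn (W^`() * W ^+ k)) in e4.
have hk : (k.+1)%:R != 0 :> algC by rewrite pnatr_eq0.
rewrite -(mulr_natr ((W^`() * W ^+ k)`_k)) -(mulr_natr ((W ^+ k.+1)`_k.+1)) in e4.
move/(congr1 (fun z => z / (k.+1)%:R)): e4; rewrite !mulfK // => <-.
by rewrite coefN subrr.
Qed.

Lemma eqN0_exp q k : eqN 1 q 0 -> eqN k (q ^+ k) 0.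
Proof.
move=> h; elim: k => [|k IH]; first by move=> i.
by rewrite exprS; apply: (eqN0_mul (N := 1) (M := k)).
Qed.

Lemma eqN_sum_seq N (I : eqType) (rs : seq I) (F G : I -> {poly algC}) :
  (forall i, i \in rs -> eqN N (F i) (G i)) ->
  eqN N (\sum_(i <- rs) F i) (\sum_(i <- rs) G i).
Proof.
move=> h j hj; rewrite !coef_sum; apply: eq_big_seq => i hi.
by apply: h.
Qed.

Lemma sign_double k : (-1) ^+ (k + k) = 1 :> algC.
Proof. by rewrite exprD -exprMn mulrNN mulr1 expr1n. Qed.

Lemma coef_prod_ffun r (F : 'I_r -> {poly algC}) n :
  (\prod_(j < r) F j)`_n =
  \sum_(f : {ffun 'I_r -> 'I_n.+1} | (\sum_(j < r) (f j : nat) == n)%N)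
     \prod_(j < r) (F j)`_(f j).
Proof.
set T := fun j => \poly_(k < n.+1) (F j)`_k.
have hT : eqN n.+1 (\prod_(j < r) F j) (\prod_(j < r) T j).
  apply: eqN_prod => j i hi; by rewrite coef_poly hi.
rewrite hT // /T.
under eq_bigr do rewrite poly_def.
rewrite bigA_distr_bigA /= coef_sum [RHS]big_mkcond /=.
apply: eq_bigr => f _.
have -> : \prod_(i < r) ((F i)`_(f i) *: 'X^(f i)) =
          (\prod_(i < r) (F i)`_(f i))%:P * 'X^(\sum_(i < r) (f i : nat)).
  rewrite rmorph_prod -prodrXr -big_split /=.
  by apply: eq_bigr => i _; rewrite mul_polyC.
rewrite coefCM coefXn eq_sym.
by case: eqP => _; rewrite ?mulr1 ?mulr0.
Qed.

Lemma coefH N r (a : 'I_r -> nat) n : (n < N)%N ->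
  (\prod_(j < r) Bpx N (- (a j)%:R))`_n = (-1) ^+ n *
   \sum_(f : {ffun 'I_r -> 'I_n.+1} | (\sum_(j < r) (f j : nat) == n)%N)
      \prod_(j < r) (bernoulli (f j) / ((f j)`!)%:R * ((a j)%:R) ^+ (f j)).
Proof.
move=> hn; rewrite coef_prod_ffun mulr_sumr; apply: eq_bigr => f /eqP hf.
rewrite -[X in (-1) ^+ X]hf -prodrXr -big_split; apply: eq_bigr => j _ /=.
have hfj : (f j < N)%N by apply: leq_ltn_trans hn; rewrite -ltnS.
by rewrite coef_poly hfj (exprNn ((a j)%:R)); ring.
Qed.
Lemma poly_zero_everywhere (p : {poly algC}) : (forall z, p.[z] = 0) -> p = 0.
Proof.
move=> h; apply/eqP; apply/negPn/negP => hp.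
set rs := [seq i%:R | i <- iota 0 (size p)] : seq algC.
have hall : all (root p) rs by apply/allP => z _; apply/rootP; apply: h.
have hu : uniq rs.
  by rewrite map_inj_uniq ?iota_uniq // => i j /eqP; rewrite eqr_nat => /eqP.
have := max_poly_roots hp hall hu.
by rewrite size_map size_iota ltnn.
Qed.

Definition Ebar (r : nat) (a : 'I_r -> nat) : {poly algC} :=
  \prod_(j < r) \sum_(k < a j) 'X^k.
Arguments Ebar {r} a.
Definition Ftil (r : nat) (c : algC -> nat -> algC) : {poly algC} :=
  \sum_(1 <= l < r.+1) c 1 l *: ((-1) ^+ r * (-1) ^+ l * ('X - 1%:P) ^+ (r - l)).

Lemma denom_eq r (a : 'I_r -> nat) :
  denom_poly a = ((-1) ^+ r * Ebar a) * ('X - 1%:P) ^+ r.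
Proof.
rewrite /denom_poly /Ebar.
have hS j : 1 - 'X^(a j) = - ('X - 1%:P) * \sum_(k < a j) 'X^k :> {poly algC}.
  by rewrite mulNr -subrX1 opprB.
under eq_bigr do rewrite hS.
rewrite big_split /= prodr_const card_ord (exprNn ('X - 1%:P)); ring.
Qed.

Lemma Ebar1 r (a : 'I_r -> nat) : (Ebar a).[1] = \prod_(j < r) (a j)%:R.
Proof.
rewrite /Ebar horner_prod; apply: eq_bigr => j _.
rewrite horner_sum; under eq_bigr do rewrite hornerXn expr1n.
by rewrite sumr_const card_ord.
Qed.

Lemma part1 (r : nat) (hr : (1 <= r)%N) (a : 'I_r -> nat) (ha : forall j, (0 < a j)%N)
  (s : seq algC) (s_uniq : uniq s)
  (s_roots : forall x : algC, (x \in s) = root (denom_poly a) x)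
  (c : algC -> nat -> algC)
  (hpf : forall z : algC, ~~ root (denom_poly a) z ->
     ((denom_poly a).[z])^-1 =
       \sum_(lam <- s) \sum_(1 <= l < (mup lam (denom_poly a)).+1)
           c lam l / (lam - z) ^+ l) :
  ('X - 1%:P) ^+ r %| 1 - Ebar a * Ftil r c.
Proof.
set D := denom_poly a.
set E0 := (-1) ^+ r * Ebar a.
have hD : D = E0 * ('X - 1%:P) ^+ r by apply: denom_eq.
have hE0 : ~~ root E0 1.
  rewrite /root /E0 hornerM Ebar1 horner_exp hornerN hornerC mulf_neq0 //.
    by rewrite expf_neq0 // oppr_eq0 oner_neq0.
  by rewrite prodf_seq_neq0; apply/allP => j _; rewrite pnatr_eq0 -lt0n ha.
have hE0n : E0 != 0 by apply: contraNneq hE0 => ->; rewrite root0.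
have hXn : ('X - 1%:P) ^+ r != 0 :> {poly algC} by rewrite expf_neq0 // polyXsubC_eq0.
have Dn0 : D != 0 by rewrite hD mulf_neq0.
have hmup1 : mup 1 D = r by rewrite hD mupMr // mup_XsubCX eqxx.
have h1s : 1 \in s.
  rewrite s_roots -/D hD rootM; apply/orP; right.
  by rewrite /root horner_exp hornerXsubC subrr expr0n (negbTE (lt0n_neq0 hr)).
set mu := fun lam => mup lam D.
set R := fun lam => D %/ ('X - lam%:P) ^+ (mu lam).
have hR lam : R lam * ('X - lam%:P) ^+ (mu lam) = D.
  by apply: divpK; rewrite -mup_geq.
set P := \sum_(lam <- s) \sum_(1 <= l < (mu lam).+1)
   c lam l *: (R lam * (-1) ^+ l * ('X - lam%:P) ^+ (mu lam - l)).
have hPz z : ~~ root D z -> P.[z] = 1.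
  move=> hz.
  have hDz : D.[z] != 0 by [].
  have := hpf z hz; rewrite -/D => hinv.
  rewrite -(mulfV hDz) hinv mulr_sumr /P horner_sum.
  apply: eq_big_seq => lam hlam.
  rewrite mulr_sumr horner_sum; apply: eq_big_nat => l /andP [hl1 hl2].
  have hlz : z - lam != 0.
    by rewrite subr_eq0; apply: contraNneq hz => ->; rewrite -s_roots.
  rewrite -(hR lam) hornerZ !hornerM !horner_exp hornerXsubC hornerN hornerC.
  have hmu : mu lam = (mu lam - l + l)%N by rewrite subnK // -ltnS.
  rewrite [in RHS]hmu exprD.
  have -> : lam - z = - (z - lam) by rewrite opprB.
  move: ((R lam).[z]) (c lam l) hlz => Rz cl hw0.
  move: (z - lam) (mu lam - l)%N hw0 => w k hw0.
  rewrite (exprNn w).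
  have hsl : ((-1) ^+ l)^-1 = (-1) ^+ l :> algC by rewrite -exprVn invrN1.
  rewrite invfM hsl.
  have hw : w ^+ l != 0 by rewrite expf_neq0.
  move: ((-1) ^+ l) (w ^+ l) hw => sl wl hw.
  by field.
have hP1 : P = 1.
  apply/eqP; rewrite -subr_eq0; apply/eqP.
  have : (P - 1) * D = 0.
    apply: poly_zero_everywhere => z; rewrite hornerM.
    case hz: (root D z); first by move/rootP: hz => ->; rewrite mulr0.
    by rewrite hornerD hornerN hPz ?hz // hornerC subrr mul0r.
  by move/eqP; rewrite mulf_eq0 (negbTE Dn0) orbF => /eqP.
have hR1 : R 1 = E0.
  apply: (mulIf hXn); rewrite -hD -hmup1; exact: hR.
have hT1 : \sum_(1 <= l < (mu 1).+1)
   c 1 l *: (R 1 * (-1) ^+ l * ('X - 1%:P) ^+ (mu 1 - l)) = Ebar a * Ftil r c.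
  rewrite /mu hmup1 hR1 /Ftil mulr_sumr; apply: eq_bigr => l _.
  by rewrite -scalerAr /E0; congr (_ *: _); ring.
have hsplit : P = \sum_(1 <= l < (mu 1).+1)
   c 1 l *: (R 1 * (-1) ^+ l * ('X - 1%:P) ^+ (mu 1 - l)) +
  \sum_(lam <- s | lam != 1) \sum_(1 <= l < (mu lam).+1)
   c lam l *: (R lam * (-1) ^+ l * ('X - lam%:P) ^+ (mu lam - l)).
  by rewrite /P (bigD1_seq 1).
rewrite hP1 hT1 in hsplit.
have -> : 1 - Ebar a * Ftil r c =
  \sum_(lam <- s | lam != 1) \sum_(1 <= l < (mu lam).+1)
   c lam l *: (R lam * (-1) ^+ l * ('X - lam%:P) ^+ (mu lam - l)).
  by rewrite {1}hsplit addrC addKr.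
apply: (big_ind (fun p => ('X - 1%:P) ^+ r %| p)); first by rewrite dvdp0.
  by move=> p q hp hq; rewrite dvdp_add.
move=> lam hlam.
have hdR : ('X - 1%:P) ^+ r %| R lam.
  rewrite -(Gauss_dvdpl _ (q := ('X - lam%:P) ^+ (mu lam))).
    by rewrite hR hD dvdp_mull.
  apply: coprimep_expl; apply: coprimep_expr; apply: coprimep_XsubC2.
  by rewrite subr_eq0.
apply: (big_ind (fun p => ('X - 1%:P) ^+ r %| p)); first by rewrite dvdp0.
  by move=> p q hp hq; rewrite dvdp_add.
move=> l _.
by rewrite -mul_polyC -!mulrA dvdp_mull // dvdp_mulr.
Qed.

Lemma comp_polyXn' (p q : {poly algC}) n : (p ^+ n) \Po q = (p \Po q) ^+ n.
Proof.
elim: n => [|n IH]; first by rewrite !expr0 comp_polyC.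
by rewrite !exprS comp_polyM IH.
Qed.

Lemma coef_signX (q : {poly algC}) m i : ((- q) ^+ m)`_i = (-1) ^+ m * (q ^+ m)`_i.
Proof. by rewrite -scaleN1r exprZn coefZ. Qed.

Lemma sign_sub (R : comNzRingType) (r l : nat) : (l <= r)%N ->
  (-1) ^+ r * (-1) ^+ l = (-1) ^+ (r - l) :> R.
Proof.
move=> hl; rewrite -exprD.
have -> : (r + l = (r - l) + (l + l))%N by lia.
by rewrite exprD [X in _ * X]exprD -exprMn mulrNN mulr1 expr1n mulr1.
Qed.

Theorem proposition4p5
  (r : nat) (hr : (1 <= r)%N) (a : 'I_r -> nat) (ha : forall j, (0 < a j)%N)
  (s : seq algC) (s_uniq : uniq s)
  (s_roots : forall x : algC, (x \in s) = root (denom_poly a) x)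
  (c : algC -> nat -> algC)
  (hpf : forall z : algC, ~~ root (denom_poly a) z ->
     ((denom_poly a).[z])^-1 =
       \sum_(lam <- s) \sum_(1 <= l < (mup lam (denom_poly a)).+1)
           c lam l / (lam - z) ^+ l)
  (m : nat) (hm1 : (1 <= m)%N) (hmr : (m <= r)%N) :
  c 1 m =
    (-1) ^+ (r - m) * ((m.-1)`!)%:R / (\prod_(j < r) (a j)%:R) *
    \sum_(m <= l < r.+1)
      ((stirling2 l m)%:R / ((l.-1)`!)%:R *
       \sum_(i : {ffun 'I_r -> 'I_(r - l).+1} | (\sum_(j < r) (i j : nat) == r - l)%N)
         \prod_(j < r) (bernoulli (i j) / ((i j)`!)%:R * ((a j)%:R) ^+ (i j))).
Proof.
have hdiv := @part1 r hr a ha s s_uniq s_roots c hpf.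
set M := r.+2.
set N := M.+1.
set Em := Ex N (-1).
set U := 1 - Em.
set V := Px N (-1).
set W := \sum_(k < N) (1 - V) ^+ k.
have hU : eqN N U ('X * V).
  by have := Ex_sub1 N (-1); rewrite opprK scale1r.
have hVW : eqN N (V * W) 1.
  have -> : V * W = 1 - (1 - V) ^+ N.
    have h := subrX1 (1 - V) N; rewrite -/W in h.
    have -> : V * W = - ((1 - V - 1) * W) by ring.
    by rewrite -h opprB.
  have h0 : eqN N ((1 - V) ^+ N) 0.
    apply: eqN0_exp => i; rewrite ltnS leqn0 => /eqP ->.
    by rewrite coefB coef1 coef_poly /= expr0 divr1 subrr coef0.
  by move=> i hi; rewrite coefB h0 // coef0 subr0.
set Fu := \sum_(1 <= l < r.+1) c 1 l *: U ^+ (r - l).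
set Q := \prod_(j < r) \sum_(k < a j) Em ^+ k.
have hEm1 : eqN 1 (Em - 1) 0.
  move=> i; rewrite ltnS leqn0 => /eqP ->.
  by rewrite coefB coef1 coef_poly /= expr0 divr1 subrr coef0.
have hA : eqN r (Fu * Q) 1.
  rewrite dvdp_eq in hdiv; move/eqP: hdiv.
  set g := (_ %/ _) => hg.
  have := congr1 (comp_poly Em) hg.
  rewrite rmorphB rmorph1 !rmorphM /= rmorphXn rmorphB /= comp_polyX comp_polyC.
  have -> : Ebar a \Po Em = Q.
    rewrite /Ebar rmorph_prod; apply: eq_bigr => j _.
    by rewrite rmorph_sum; apply: eq_bigr => k _; rewrite rmorphXn /= comp_polyX.
  have -> : Ftil r c \Po Em = Fu.
    rewrite /Ftil rmorph_sum; apply: eq_big_nat => l /andP [_ hl].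
    rewrite /= comp_polyZ !comp_polyM !comp_polyXn' comp_polyB comp_polyX !comp_polyC.
    have hN1 : (-1 : {poly algC}) \Po Em = -1 by rewrite -polyC1 -polyCN comp_polyC.
    have hl' : (l <= r)%N by rewrite -ltnS.
    rewrite hN1 (@sign_sub _ r l hl') -exprMn mulN1r opprB polyC1.
    by [].
  move=> h.
  have hz : eqN 0 (g \Po Em) 0 by move=> i; rewrite ltn0.
  have hEm1' : eqN 1 (Em - 1%:P) 0 by rewrite polyC1.
  have h0 : eqN r ((g \Po Em) * (Em - 1%:P) ^+ r) 0 := eqN0_mul hz (eqN0_exp _ r hEm1').
  rewrite -h mulrC in h0.
  move=> i hi; have := h0 i hi; rewrite coefB coef0 => /eqP; rewrite subr_eq0 => /eqP <-.
  by [].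
set H := \prod_(j < r) Bpx N (- (a j)%:R).
set PA := \prod_(j < r) ((a j)%:R : algC).
have hB : forall j : 'I_r, eqN M (V * (\sum_(k < a j) Em ^+ k) * Bpx N (- (a j)%:R)) ((a j)%:R)%:P.
  move=> j; set Sj := \sum_(k < a j) Em ^+ k.
  set x := (- (a j)%:R : algC).
  have h1 : U * Sj = 1 - Em ^+ a j by rewrite /U -opprB mulNr -subrX1 opprB.
  have h2 : eqN N (1 - Em ^+ a j) ('X * ((a j)%:R *: Px N x)).
    have e1 := eqN_sub (eqN_refl N 1) (Ex_exp N (-1) (a j)).
    have e2 := Ex_sub1 N ((-1) *+ a j).
    rewrite mulNrn in e1 e2.
    apply: (eqN_trans e1); apply: (eqN_trans e2).
    by apply: eqN_eq; rewrite opprK scalerAr.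
  have h3 : eqN N ('X * (V * Sj)) ('X * ((a j)%:R *: Px N x)).
    apply: (eqN_trans _ h2); rewrite -h1 mulrA.
    exact: (eqN_mul (eqN_sym hU) (eqN_refl _ _)).
  have h4 := eqN_mulX h3.
  apply: (eqN_trans (eqN_mul h4 (eqN_refl _ (Bpx N x)))).
  rewrite -scalerAl mulrC.
  have h5 : eqN M (Bpx N x * Px N x) 1 by apply: (eqN_le (M := N)) => //; apply: Bp_P.
  apply: (eqN_trans (eqN_scale ((a j)%:R) h5)).
  by apply: eqN_eq; rewrite alg_polyC.
have hC : eqN M (V ^+ r * Q * H) PA%:P.
  have := eqN_prod (rs := index_enum 'I_r) hB.
  by rewrite !big_split /= prodr_const card_ord rmorph_prod.
have hD : eqN r (PA *: Fu) (V ^+ r * H).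
  have hrM : (r <= M)%N by rewrite /M; lia.
  have e1 : eqN r (PA *: Fu) (Fu * (V ^+ r * Q * H)).
    rewrite -mul_polyC mulrC; apply: eqN_mul => //.
    exact: (eqN_sym (eqN_le hrM hC)).
  apply: (eqN_trans e1).
  have -> : Fu * (V ^+ r * Q * H) = (Fu * Q) * (V ^+ r * H) by ring.
  apply: (eqN_trans (eqN_mul hA (eqN_refl _ _))).
  by rewrite mul1r.
have hrN : (r <= N)%N by rewrite /N /M; lia.
have hE : eqN r (PA *: \sum_(1 <= l < r.+1) c 1 l *: ('X^(r - l) * W ^+ l)) H.
  have e1 : eqN N (W ^+ r * Fu) (\sum_(1 <= l < r.+1) c 1 l *: ('X^(r - l) * W ^+ l)).
    rewrite /Fu mulr_sumr; apply: eqN_sum_seq => l; rewrite mem_index_iota => /andP [_ hl].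
    rewrite -scalerAr; apply: eqN_scale.
    have hl' : (l <= r)%N by rewrite -ltnS.
    have -> : W ^+ r = W ^+ (r - l) * W ^+ l by rewrite -exprD subnK.
    have e2 : eqN N (W ^+ (r - l) * W ^+ l * U ^+ (r - l))
       (W ^+ (r - l) * W ^+ l * ('X * V) ^+ (r - l)) :=
       eqN_mul (eqN_refl _ _) (eqN_exp (r - l) hU).
    apply: (eqN_trans e2).
    have -> : W ^+ (r - l) * W ^+ l * ('X * V) ^+ (r - l) =
       'X^(r - l) * ((V * W) ^+ (r - l) * W ^+ l) by rewrite !exprMn; ring.
    apply: eqN_mul => //.
    have := eqN_mul (eqN_exp (r - l) hVW) (eqN_refl N (W ^+ l)).
    by rewrite expr1n mul1r.
  apply: (eqN_trans (eqN_scale PA (eqN_sym (eqN_le hrN e1)))).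
  rewrite scalerAr.
  apply: (eqN_trans (eqN_mul (eqN_refl _ (W ^+ r)) hD)).
  have -> : W ^+ r * (V ^+ r * H) = (V * W) ^+ r * H by rewrite exprMn; ring.
  have := eqN_mul (eqN_exp r (eqN_le hrN hVW)) (eqN_refl r H).
  by rewrite expr1n mul1r.
have hF : forall p, (1 <= p <= r)%N -> H`_(r - p) =
   PA * \sum_(1 <= l < r.+1) c 1 l * (if (l < p)%N then 0 else (W ^+ l)`_(l - p)).
  move=> p /andP [hp1 hpr].
  rewrite -hE; last by lia.
  rewrite coefZ coef_sum; congr (PA * _); apply: eq_big_nat => l /andP [hl1 hl2].
  rewrite coefZ coefXnM.
  have -> : (r - p < r - l)%N = (l < p)%N by apply/idP/idP; lia.
  case: (ltnP l p) => h //.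
  by have -> : (r - p - (r - l) = l - p)%N by lia.
have hG : forall l, (1 <= l <= r)%N ->
  \sum_(1 <= p < r.+1) (U^`() * U ^+ m.-1)`_(p.-1) *
     (if (l < p)%N then 0 else (W ^+ l)`_(l - p)) = (m == l)%:R.
  move=> l /andP [hl1 hlr].
  have hlN : (l < N.-1)%N by rewrite /N /M /=; lia.
  rewrite -(@ortho_coef N V W U m l hVW hU hm1 hl1 hlN) coefM.
  rewrite (@big_cat_nat _ _ _ l.+1) //=.
  set S2 := \sum_(l.+1 <= i < r.+1) _.
  have -> : S2 = 0.
    rewrite /S2 big_nat_cond big1 //.
    by move=> p /andP [/andP [hp _] _]; rewrite hp mulr0.
  rewrite addr0.
  rewrite big_add1 /= big_mkord (prednK hl1).
  apply: eq_bigr => i _.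
  have hi := ltn_ord i.
  rewrite ltnS leqNgt hi /=.
  by have -> : (l - i.+1 = l.-1 - i)%N by lia.
set K := fun p => (U^`() * U ^+ m.-1)`_(p.-1).
set A := fun p l => (if (l < p)%N then 0 else (W ^+ l)`_(l - p)).
have hH : \sum_(1 <= p < r.+1) K p * H`_(r - p) = PA * c 1 m.
  transitivity (\sum_(1 <= p < r.+1) K p * (PA * \sum_(1 <= l < r.+1) c 1 l * A p l)).
    by apply: eq_big_nat => p hp; rewrite hF.
  transitivity (PA * \sum_(1 <= l < r.+1) c 1 l * \sum_(1 <= p < r.+1) K p * A p l).
    have e : forall p, K p * (PA * \sum_(1 <= l < r.+1) c 1 l * A p l) =
       PA * \sum_(1 <= l < r.+1) c 1 l * (K p * A p l).
      move=> p; rewrite mulrCA; congr (PA * _); rewrite mulr_sumr.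
      by apply: eq_bigr => l _; rewrite mulrCA.
    under eq_bigr do rewrite e.
    rewrite -mulr_sumr exchange_big_nat /=; congr (PA * _).
    by apply: eq_bigr => l _; rewrite mulr_sumr.
  congr (PA * _).
  transitivity (\sum_(1 <= l < r.+1) c 1 l * (m == l)%:R).
    by apply: eq_big_nat => l hl; rewrite hG.
  rewrite (bigD1_seq m) /=; last by rewrite iota_uniq.
    rewrite eqxx mulr1 big1 ?addr0 // => l hl.
    by rewrite eq_sym (negbTE hl) mulr0.
  by rewrite mem_index_iota hm1 ltnS.
have hK : forall p, (1 <= p <= r)%N -> K p =
    (-1) ^+ (m + p) * ((m.-1)`!)%:R * (stirling2 p m)%:R / ((p.-1)`!)%:R.
  move=> p /andP [hp1 hpr].
  have hpN : (p < N)%N by rewrite /N /M; lia.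
  have e1 : ((U ^+ m)^`())`_(p.-1) = (U ^+ m)`_p *+ p.
    by rewrite coef_deriv (prednK hp1).
  rewrite deriv_exp (coefMn (U^`() * U ^+ m.-1)) in e1.
  have hUE : U = - (Em - 1) by rewrite /U opprB.
  rewrite hUE coef_signX in e1.
  have e4 := @stir N (-1) p m hpN.
  rewrite -/Em in e4.
  move: e1 e4; rewrite -hUE -/(K p).
  set X := ((Em - 1) ^+ m)`_p; set k := K p.
  move=> e1 e4.
  have hm0 : (m%:R : algC) != 0 by rewrite pnatr_eq0 -lt0n.
  have hp0 : (p%:R : algC) != 0 by rewrite pnatr_eq0 -lt0n.
  have hmf : (m`!)%:R = (m%:R) * ((m.-1)`!)%:R :> algC.
    by rewrite -natrM -{1}(prednK hm1) factS prednK.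
  have hpf' : (p`!)%:R = (p%:R) * ((p.-1)`!)%:R :> algC.
    by rewrite -natrM -{1}(prednK hp1) factS prednK.
  have hf1 := fact_neq0 (m.-1); have hf2 := fact_neq0 (p.-1).
  have eX : X = (-1) ^+ p * (m`!)%:R * (stirling2 p m)%:R / (p`!)%:R.
    by rewrite -e4 mulfK // fact_neq0.
  have ek : k = (-1) ^+ m * X * p%:R / m%:R.
    move: e1; rewrite -(mulr_natr k m) -(mulr_natr ((-1) ^+ m * X) p) => e1.
    by rewrite -e1 mulfK.
  rewrite ek eX hmf hpf' exprD.
  by field; rewrite hm0 hp0 hf2.
have hPA : PA != 0.
  by rewrite prodf_seq_neq0; apply/allP => j _; rewrite pnatr_eq0 -lt0n ha.
have hc : c 1 m = PA^-1 * \sum_(1 <= p < r.+1) K p * H`_(r - p) by rewrite hH mulKf.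
rewrite hc (@big_cat_nat _ _ _ m) //=; last by lia.
set S1 := \sum_(1 <= p < m) _.
have -> : S1 = 0.
  rewrite /S1 big_nat_cond big1 // => p /andP [/andP [hp1 hpm] _].
  rewrite hK; last by apply/andP; split => //; lia.
  by rewrite stirling2_small // !(mulr0, mul0r).
rewrite add0r !mulr_sumr; apply: eq_big_nat => p /andP [hmp hpr].
have hpr' : (p <= r)%N by rewrite -ltnS.
rewrite hK; last by apply/andP; split => //; lia.
rewrite (@coefH N r a (r - p)); last by rewrite /N /M; lia.
have hsg : (-1) ^+ (m + p) * (-1) ^+ (r - p) = (-1) ^+ (r - m) :> algC.
  rewrite -exprD.
  have -> : (m + p + (r - p) = (r - m) + (m + m))%N by lia.
  by rewrite exprD sign_double mulr1.
rewrite -hsg; ring.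
Qed.
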